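(* For any group $H$, the set $\mathcal I_H=\{G\in\mathcal G:\ \overline G\cong H\}$ is either meager or comeager in $\mathcal G$.
   Context: Let $\mathbb N=\{1,2,3,\dots\}$. Equip $\mathbb N^{\mathbb N\times\mathbb N}$ with the product topology of the discrete topology on $\mathbb N$. Let $\mathcal G$ be the subspace consisting of those $A\in\mathbb N^{\mathbb N\times\mathbb N}$ that are the multiplication table of a group on the underlying set $\mathbb N$ whose identity element is $1$. For $G\in\mathcal G$, $\overline G$ denotes the group on $\mathbb N$ with multiplication table $G$. *)

(* Defs.v *)
(* Convention: the underlying set N = {1,2,3,...} is represented by Rocq's
   [nat] via the bijection k |-> k+1, so the identity element 1 of the paper
   is represented by 0. *)

Definition Table := nat -> nat -> nat.

Definition is_group_table (G : Table) : Prop :=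
  (forall x y z, G (G x y) z = G x (G y z)) /\
  (forall x, G 0 x = x /\ G x 0 = x) /\
  (forall x, exists y, G x y = 0 /\ G y x = 0).

Definition agree (n : nat) (A B : Table) : Prop :=
  forall i j, i < n -> j < n -> A i j = B i j.

(* Open sets of the subspace [is_group_table] of N^(N x N) (product of
   discrete topologies): subsets V of the space such that each point of V has
   a basic cylinder neighbourhood whose trace on the space lies in V. *)
Definition rel_open (V : Table -> Prop) : Prop :=
  (forall A, V A -> is_group_table A) /\
  (forall A, V A -> exists n, forall B, is_group_table B -> agree n A B -> V B).

Definition rel_closure (X : Table -> Prop) (A : Table) : Prop :=
  is_group_table A /\
  (forall n, exists B, is_group_table B /\ agree n A B /\ X B).

Definition nowhere_dense (X : Table -> Prop) : Prop :=
  forall V, rel_open V -> (forall A, V A -> rel_closure X A) ->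
    forall A, ~ V A.

Definition meager (X : Table -> Prop) : Prop :=
  exists Ns : nat -> Table -> Prop,
    (forall k, nowhere_dense (Ns k)) /\
    (forall A, is_group_table A -> X A -> exists k, Ns k A).

Definition comeager (X : Table -> Prop) : Prop :=
  meager (fun A => is_group_table A /\ ~ X A).

Definition iso_class {H : Type} (mul : H -> H -> H) (G : Table) : Prop :=
  is_group_table G /\
  exists (f : nat -> H) (g : H -> nat),
    (forall x, g (f x) = x) /\ (forall h, f (g h) = h) /\
    (forall x y, f (G x y) = mul (f x) (f y)).

(* Main.v *)
Require Import Defs.
From Stdlib Require Import Arith Lia List Classical ClassicalEpsilon Cantor.
Import ListNotations.

Definition bij (f g : nat -> nat) : Prop := (forall x, g (f x) = x) /\ (forall y, f (g y) = y).
Definition ishom (A C : Table) (f : nat -> nat) : Prop := forall x y, C (f x) (f y) = f (A x y).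
Definition transport (f g : nat -> nat) (A : Table) : Table := fun x y => f (A (g x) (g y)).

Lemma agree_refl n A : agree n A A.
Proof. intros i j _ _; reflexivity. Qed.
Lemma agree_sym n A B : agree n A B -> agree n B A.
Proof. intros H i j Hi Hj; symmetry; auto. Qed.
Lemma agree_trans n A B C : agree n A B -> agree n B C -> agree n A C.
Proof. intros H1 H2 i j Hi Hj; rewrite H1 by auto; auto. Qed.

Lemma idem_zero C e : is_group_table C -> C e e = e -> e = 0.
Proof.
  intros [Has [Hid Hinv]] He.
  destruct (Hinv e) as [y [Hy1 Hy2]].
  assert (H : C (C y e) e = C y (C e e)) by apply Has.
  rewrite He, Hy2 in H. destruct (Hid e) as [H0 _]. rewrite H0 in H. exact H.
Qed.

Lemma hom_zero A C f : is_group_table A -> is_group_table C -> ishom A C f -> f 0 = 0.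
Proof.
  intros HA HC Hf. apply (idem_zero C); auto.
  rewrite Hf. destruct HA as [_ [Hid _]]. destruct (Hid 0) as [H0 _]. rewrite H0. reflexivity.
Qed.

Lemma bij_zero f g : bij f g -> f 0 = 0 -> g 0 = 0.
Proof. intros [H1 H2] H. rewrite <- H at 1. apply H1. Qed.

Lemma bij_sym f g : bij f g -> bij g f.
Proof. intros [H1 H2]; split; auto. Qed.

Lemma transport_group f g A : is_group_table A -> bij f g -> f 0 = 0 -> is_group_table (transport f g A).
Proof.
  intros [Has [Hid Hinv]] [H1 H2] H0.
  assert (G0 : g 0 = 0) by (rewrite <- H0 at 1; apply H1).
  unfold transport; split; [|split].
  - intros x y z. rewrite !H1. rewrite Has. reflexivity.
  - intros x. rewrite G0. destruct (Hid (g x)) as [Ha Hb]. rewrite Ha, Hb, H2. split; reflexivity.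
  - intros x. destruct (Hinv (g x)) as [y [Hy1 Hy2]]. exists (f y). rewrite !H1, Hy1, Hy2, H0. split; reflexivity.
Qed.

Lemma transport_hom f g A : bij f g -> ishom A (transport f g A) f.
Proof. intros [H1 H2] x y. unfold transport. rewrite !H1. reflexivity. Qed.

Lemma hom_transport_eq A C f g : ishom A C f -> bij f g -> forall x y, C x y = transport f g A x y.
Proof. intros Hf [H1 H2] x y. unfold transport. rewrite <- Hf, !H2. reflexivity. Qed.

Lemma hom_inv A C f g : ishom A C f -> bij f g -> ishom C A g.
Proof.
  intros Hf [H1 H2] x y. rewrite <- (H1 (A (g x) (g y))). rewrite <- Hf, !H2. reflexivity.
Qed.

Lemma hom_comp A B C f g : ishom A B f -> ishom B C g -> ishom A C (fun x => g (f x)).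
Proof. intros Hf Hg x y. rewrite Hg, Hf. reflexivity. Qed.

Lemma bij_comp f g f' g' : bij f g -> bij f' g' -> bij (fun x => f' (f x)) (fun y => g (g' y)).
Proof. intros [H1 H2] [H3 H4]; split; intros; rewrite ?H3, ?H1, ?H2, ?H4; reflexivity. Qed.

Lemma bound (f : nat -> nat) l : exists L, forall x, x < l -> f x < L.
Proof.
  induction l as [|l [L HL]]. exists 0; intros; lia.
  exists (S (max L (f l))). intros x Hx. destruct (Nat.eq_dec x l). subst; lia.
  specialize (HL x ltac:(lia)); lia.
Qed.

Lemma bound2 (D : Table) k : exists L, forall x y, x < k -> y < k -> D x y < L.
Proof.
  induction k as [|k [L HL]]. exists 0; intros; lia.
  destruct (bound (fun y => D k y) (S k)) as [L1 H1].
  destruct (bound (fun x => D x k) (S k)) as [L2 H2].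
  exists (L + L1 + L2). intros x y Hx Hy.
  destruct (Nat.eq_dec x k) as [->|]. specialize (H1 y Hy); cbv beta in H1; lia.
  destruct (Nat.eq_dec y k) as [->|]. specialize (H2 x Hx); cbv beta in H2; lia.
  specialize (HL x y ltac:(lia) ltac:(lia)); lia.
Qed.

Definition Sq (A0 : Table) (q : list nat) (C : Table) : Prop :=
  is_group_table C /\ exists f g, bij f g /\ ishom A0 C f /\ forall j, j < length q -> f (nth j q 0) = j.

Lemma cl_transport (T T' : Table -> Prop) B' B r ri :
  rel_closure T B' -> is_group_table B -> bij r ri -> ishom B' B r ->
  (forall F, T F -> is_group_table F -> T' (transport r ri F)) -> rel_closure T' B.
Proof.
  intros [HB' Hcl] HB Hb Hr HT. split; auto. intros l.
  destruct (bound ri l) as [L HL].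
  destruct (Hcl L) as [F [HF [Hag HTF]]].
  assert (r0 : r 0 = 0) by (apply (hom_zero B' B r); auto).
  exists (transport r ri F). split; [apply transport_group; auto|]. split; [|apply HT; auto].
  intros i j Hi Hj. rewrite (hom_transport_eq _ _ _ _ Hr Hb). unfold transport. rewrite Hag; auto.
Qed.

Fixpoint enc_list (l : list nat) : nat :=
  match l with [] => 0 | x :: l' => S (to_nat (x, enc_list l')) end.

Lemma enc_inj l1 l2 : enc_list l1 = enc_list l2 -> l1 = l2.
Proof.
  revert l2; induction l1 as [|x l1 IH]; intros [|y l2]; cbn [enc_list]; try discriminate; auto.
  intros H. apply (f_equal pred) in H. cbn [pred] in H. apply (f_equal of_nat) in H. rewrite !cancel_of_to in H.
  injection H as -> H. f_equal; auto.
Qed.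

Lemma nd_mono (Y Z : Table -> Prop) : nowhere_dense Y -> (forall A, Z A -> Y A) -> nowhere_dense Z.
Proof.
  unfold nowhere_dense. intros HY HZ V HV Hcl A HA. apply (HY V HV) with A; auto.
  intros A' HA'. destruct (Hcl A' HA') as [HX Hc]. split; auto. intros n.
  destruct (Hc n) as [B [H1 [H2 H3]]]. exists B; auto.
Qed.

Lemma key A0 : is_group_table A0 -> ~ meager (Sq A0 []) ->
  forall q C, Sq A0 q C -> exists m, forall B, is_group_table B -> agree m C B -> rel_closure (Sq A0 q) B.
Proof.
  intros HA0 NM q C [HC [phi [phii [Hb [Hh Hq]]]]].
  set (T := fun p C' => is_group_table C' /\ exists f g, bij f g /\ ishom A0 C' f /\
             forall j, j < length q -> f (nth j q 0) = nth j p 0).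
  assert (Hex : exists p, ~ nowhere_dense (T p)).
  { apply NNPP. intros Hn. apply NM.
    exists (fun k A => exists p, enc_list p = k /\ T p A). split.
    - intros k. destruct (classic (exists p, enc_list p = k)) as [[p0 Hp0]|Hno].
      + apply nd_mono with (T p0). { apply NNPP; intros H'; apply Hn; exists p0; exact H'. }
        intros A [p [Hp HT]]. rewrite <- Hp0 in Hp. apply enc_inj in Hp. subst; auto.
      + apply nd_mono with (T []). { apply NNPP; intros H'; apply Hn; exists []; exact H'. }
        intros A [p [Hp _]]. exfalso; apply Hno; eauto.
    - intros A HA [_ [f [g [Hfg [Hf _]]]]]. exists (enc_list (map f q)). exists (map f q). split; auto.
      split; auto. exists f, g. split; [exact Hfg|]. split; [exact Hf|].
      intros j Hj. rewrite nth_indep with (l := map f q) (d' := f 0) by (rewrite length_map; auto).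
      rewrite map_nth. reflexivity. }
  destruct Hex as [p Hp].
  unfold nowhere_dense in Hp.
  apply not_all_ex_not in Hp as [V Hp].
  apply imply_to_and in Hp as [HV Hp]. apply imply_to_and in Hp as [HVcl Hp].
  apply not_all_ex_not in Hp as [A HA]. apply NNPP in HA.
  destruct HV as [HVX HVo]. destruct (HVo A HA) as [k Hk].
  destruct (HVcl A HA) as [_ HclA].
  destruct (HclA k) as [C' [HC' [HAC' [_ [f' [g' [Hb' [Hh' Hq']]]]]]]].
  set (s := fun x => f' (phii x)). set (si := fun x => phi (g' x)).
  assert (Hs : bij s si).
  { destruct Hb as [b1 b2]; destruct Hb' as [b1' b2']; split; intros; unfold s, si;
    rewrite ?b1', ?b2, ?b1, ?b2'; reflexivity. }
  assert (Hsh : ishom C C' s) by exact (hom_comp C A0 C' phii f' (hom_inv _ _ _ _ Hh Hb) Hh').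
  assert (Hsq : forall j, j < length q -> s j = nth j p 0).
  { intros j Hj. unfold s. assert (E : phii j = nth j q 0).
    { destruct Hb as [b1 _]. rewrite <- (b1 (nth j q 0)), (Hq j Hj). reflexivity. }
    rewrite E. apply Hq'; auto. }
  destruct (bound si k) as [L HL].
  exists L. intros B HB HCB.
  assert (s0 : s 0 = 0) by (apply (hom_zero C C' s); auto).
  assert (si0 : si 0 = 0) by (apply (bij_zero s si); auto).
  set (B' := transport s si B).
  assert (HB' : is_group_table B') by (apply transport_group; auto).
  assert (HclB' : rel_closure (T p) B').
  { apply HVcl. apply Hk; auto. apply agree_trans with C'; auto.
    intros i j Hi Hj. rewrite (hom_transport_eq C C' s si Hsh Hs). unfold B', transport.
    rewrite HCB; auto. }
  apply (cl_transport (T p) (Sq A0 q) B' B si s); auto.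
  - apply bij_sym; exact Hs.
  - exact (hom_inv _ _ _ _ (transport_hom s si B Hs) Hs).
  - intros F [_ [fF [gF [HbF [HhF HqF]]]]] HF. split.
    + apply transport_group; auto. apply bij_sym; exact Hs.
    + exists (fun x => si (fF x)), (fun y => gF (s y)). split.
      * exact (bij_comp _ _ _ _ HbF (bij_sym _ _ Hs)).
      * split.
        -- exact (hom_comp _ _ _ _ _ HhF (transport_hom si s F (bij_sym _ _ Hs))).
        -- intros j Hj. rewrite HqF; auto. rewrite <- (Hsq j Hj). apply Hs.
Qed.

Definition prodT (D E : Table) : Table := fun x y =>
  to_nat (D (fst (of_nat x)) (fst (of_nat y)), E (snd (of_nat x)) (snd (of_nat y))).

Lemma of_nat0 : of_nat 0 = (0,0). Proof. reflexivity. Qed.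

Lemma prod_group D E : is_group_table D -> is_group_table E -> is_group_table (prodT D E).
Proof.
  intros [Da [Di Dv]] [Ea [Ei Ev]]. unfold prodT. split; [|split].
  - intros x y z. rewrite !cancel_of_to. cbn [fst snd]. rewrite Da, Ea. reflexivity.
  - intros x. rewrite of_nat0. cbn [fst snd].
    destruct (Di (fst (of_nat x))) as [H1 H2]. destruct (Ei (snd (of_nat x))) as [H3 H4].
    rewrite H1, H2, H3, H4. rewrite <- surjective_pairing, cancel_to_of. split; reflexivity.
  - intros x. destruct (Dv (fst (of_nat x))) as [a [Ha1 Ha2]].
    destruct (Ev (snd (of_nat x))) as [b [Hb1 Hb2]]. exists (to_nat (a,b)).
    rewrite cancel_of_to. cbn [fst snd]. rewrite Ha1, Ha2, Hb1, Hb2. split; reflexivity.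
Qed.

Definition swap (b c x : nat) : nat := if Nat.eqb x b then c else if Nat.eqb x c then b else x.

Lemma swap_inv b c x : swap b c (swap b c x) = x.
Proof.
  unfold swap.
  destruct (Nat.eqb_spec x b); destruct (Nat.eqb_spec x c); subst;
  repeat match goal with |- context [Nat.eqb ?a ?b] => destruct (Nat.eqb_spec a b); subst end;
  try reflexivity; try congruence.
Qed.

Lemma extend (a : nat -> nat) K : (forall i j, i < K -> j < K -> a i = a j -> i = j) ->
  exists f g, bij f g /\ forall i, i < K -> f i = a i.
Proof.
  induction K as [|K IH]; intros Hinj.
  - exists (fun x => x), (fun x => x). split; [split; reflexivity| intros; lia].
  - destruct IH as [f [g [[H1 H2] Hf]]]. { intros; apply Hinj; auto; lia. }
    exists (fun x => swap (f K) (a K) (f x)), (fun y => g (swap (f K) (a K) y)). split. split; intros.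
    + rewrite swap_inv, H1. reflexivity.
    + rewrite H2, swap_inv. reflexivity.
    + intros i Hi. destruct (Nat.eq_dec i K) as [->|Hne].
      * unfold swap. rewrite Nat.eqb_refl. reflexivity.
      * rewrite (Hf i) by lia. unfold swap. destruct (Nat.eqb_spec (a i) (f K)) as [E|E].
        -- exfalso. assert (Hik : i < K) by lia. rewrite <- (Hf i Hik) in E. apply Hne.
           assert (E2 : g (f i) = g (f K)) by (rewrite E; reflexivity). rewrite !H1 in E2. exact E2.
        -- destruct (Nat.eqb_spec (a i) (a K)) as [E'|E'].
           ++ exfalso; apply Hne; apply Hinj; auto; lia.
           ++ reflexivity.
Qed.

Lemma density A0 C0 m : Sq A0 [] C0 ->
  (forall B, is_group_table B -> agree m C0 B -> rel_closure (Sq A0 []) B) ->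
  forall D k, is_group_table D -> exists C, Sq A0 [] C /\ agree k D C.
Proof.
  intros HC0 Hm D k HD.
  assert (HC0g : is_group_table C0) by apply HC0.
  set (P := prodT D C0).
  assert (HP : is_group_table P) by (apply prod_group; auto).
  destruct (bound2 D k) as [L1 HL1].
  destruct (bound2 C0 m) as [L2 HL2].
  destruct (extend (fun i => to_nat (i, 0)) (S (L1 + k))) as [f1 [g1 [Hb1 Hf1]]].
  { intros i j _ _ H. apply (f_equal of_nat) in H. rewrite !cancel_of_to in H. congruence. }
  destruct (extend (fun i => to_nat (0, i)) (S (L2 + m))) as [f2 [g2 [Hb2 Hf2]]].
  { intros i j _ _ H. apply (f_equal of_nat) in H. rewrite !cancel_of_to in H. congruence. }
  assert (Hf1' : forall i, i < S (L1 + k) -> f1 i = to_nat (i, 0)) by exact Hf1.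
  assert (Hf2' : forall i, i < S (L2 + m) -> f2 i = to_nat (0, i)) by exact Hf2.
  assert (f10 : f1 0 = 0) by (rewrite Hf1' by lia; reflexivity).
  assert (f20 : f2 0 = 0) by (rewrite Hf2' by lia; reflexivity).
  assert (g10 : g1 0 = 0) by (apply (bij_zero f1 g1); auto).
  assert (g20 : g2 0 = 0) by (apply (bij_zero f2 g2); auto).
  assert (Hb1' : bij g1 f1) by (apply bij_sym; auto).
  assert (Hb2' : bij g2 f2) by (apply bij_sym; auto).
  set (E := transport g1 f1 P). set (E' := transport g2 f2 P).
  assert (HE : is_group_table E) by (apply transport_group; auto).
  assert (HE' : is_group_table E') by (apply transport_group; auto).
  destruct HC0g as [HC0a [HC0i HC0v]].
  destruct HD as [HDa [HDi HDv]].
  assert (HDE : agree k D E).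
  { intros x y Hx Hy. unfold E, transport, P, prodT. rewrite !Hf1' by lia. rewrite !cancel_of_to.
    cbn [fst snd]. rewrite (proj1 (HC0i 0)).
    specialize (HL1 x y Hx Hy).
    rewrite <- (Hf1' (D x y)) by lia. destruct Hb1 as [h1 h2]. rewrite h1. reflexivity. }
  assert (HE'C : agree m C0 E').
  { intros x y Hx Hy. unfold E', transport, P, prodT. rewrite !Hf2' by lia. rewrite !cancel_of_to.
    cbn [fst snd]. rewrite (proj1 (HDi 0)).
    specialize (HL2 x y Hx Hy).
    rewrite <- (Hf2' (C0 x y)) by lia. destruct Hb2 as [h1 h2]. rewrite h1. reflexivity. }
  assert (HclE' : rel_closure (Sq A0 []) E') by (apply Hm; auto).
  assert (Hrb : bij (fun x => g1 (f2 x)) (fun y => g2 (f1 y))) by exact (bij_comp _ _ _ _ Hb2 Hb1').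
  assert (Hrh : ishom E' E (fun x => g1 (f2 x))).
  { exact (hom_comp _ _ _ _ _ (hom_inv _ _ _ _ (transport_hom g2 f2 P Hb2') Hb2') (transport_hom g1 f1 P Hb1')). }
  assert (HclE : rel_closure (Sq A0 []) E).
  { apply (cl_transport (Sq A0 []) (Sq A0 []) E' E (fun x => g1 (f2 x)) (fun y => g2 (f1 y))); auto.
    intros F [HF [fF [gF [Hb [Hh _]]]]] _. split.
    - apply transport_group; auto. rewrite f20, g10; reflexivity.
    - exists (fun x => g1 (f2 (fF x))), (fun y => gF (g2 (f1 y))). split; [|split].
      + exact (bij_comp _ _ _ _ Hb Hrb).
      + exact (hom_comp _ _ _ _ _ Hh (transport_hom _ _ F Hrb)).
      + intros j Hj; simpl in Hj; lia. }
  destruct HclE as [_ Hc]. destruct (Hc k) as [C [HC [HEC HSC]]].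
  exists C. split; auto. apply agree_trans with E; auto.
Qed.

Definition Rq A0 q B := exists m, forall B', is_group_table B' -> agree m B B' -> rel_closure (Sq A0 q) B'.
Definition Bad0 A0 B := is_group_table B /\ ~ Rq A0 [] B.
Definition Bad A0 q t B := is_group_table B /\ Rq A0 q B /\
  ~ (exists r, r <> [] /\ In t (q ++ r) /\ Rq A0 (q ++ r) B).

Definition KeyP A0 := forall q C, Sq A0 q C ->
  exists m, forall B, is_group_table B -> agree m C B -> rel_closure (Sq A0 q) B.
Definition DensP A0 := forall D k, is_group_table D -> exists C, Sq A0 [] C /\ agree k D C.

Lemma R_near A0 q C m : (forall B, is_group_table B -> agree m C B -> rel_closure (Sq A0 q) B) ->
  forall D, agree m C D -> Rq A0 q D.
Proof. intros H D HD. exists m. intros B' HB' HDB'. apply H; auto. apply agree_trans with D; auto. Qed.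

Lemma nd_Bad0 A0 : KeyP A0 -> DensP A0 -> nowhere_dense (Bad0 A0).
Proof.
  intros K Dn. unfold nowhere_dense. intros V [HVX HVo] Hcl A HA. destruct (HVo A HA) as [k Hk].
  destruct (Dn A k (HVX A HA)) as [C [HC HAC]].
  assert (HVC : V C) by (apply Hk; [apply HC | exact HAC]).
  destruct (K [] C HC) as [m Hm].
  destruct (Hcl C HVC) as [_ Hc]. destruct (Hc m) as [D [HD [HCD [_ HnR]]]].
  apply HnR. eapply R_near; eauto.
Qed.

Lemma nth_map_seq (f : nat -> nat) L j : j < L -> nth j (map f (seq 0 L)) 0 = f j.
Proof.
  intros. rewrite nth_indep with (l := map f (seq 0 L)) (d' := f 0) by (rewrite length_map, length_seq; auto).
  rewrite map_nth, seq_nth; auto.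
Qed.

Lemma nd_Bad A0 q t : KeyP A0 -> nowhere_dense (Bad A0 q t).
Proof.
  intros K. unfold nowhere_dense. intros V [HVX HVo] Hcl A HA. destruct (HVo A HA) as [k Hk].
  destruct (Hcl A HA) as [_ Hc]. destruct (Hc k) as [D1 [HD1 [HAD1 [_ [[m1 Hm1] _]]]]].
  destruct (Hm1 D1 HD1 (agree_refl _ _)) as [_ Hc1]. destruct (Hc1 k) as [C [HCg [HD1C HSC]]].
  destruct HSC as [_ [phi [phii [[b1 b2] [Hh Hq]]]]].
  set (n := length q). set (L := n + S (phi t)).
  set (r := map phii (seq n (S (phi t)))).
  assert (Hq' : q = map phii (seq 0 n)).
  { apply nth_ext with 0 0. rewrite length_map, length_seq; reflexivity.
    intros j Hj. rewrite nth_map_seq by auto. rewrite <- (b1 (nth j q 0)), (Hq j Hj). reflexivity. }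
  assert (Hqr : q ++ r = map phii (seq 0 L)).
  { rewrite Hq' at 1. unfold L, r. rewrite seq_app, map_app. reflexivity. }
  assert (HSC' : Sq A0 (q ++ r) C).
  { split; [exact HCg|]. exists phi, phii. split; [split; auto|]. split; auto.
    intros j Hj. rewrite Hqr in Hj |- *. rewrite length_map, length_seq in Hj.
    rewrite nth_map_seq by auto. apply b2. }
  assert (Hin : In t (q ++ r)).
  { rewrite Hqr. apply in_map_iff. exists (phi t). split; [apply b1|]. apply in_seq. unfold L; lia. }
  assert (Hrne : r <> []) by (unfold r; simpl; discriminate).
  destruct (K (q ++ r) C HSC') as [m2 Hm2].
  assert (HVC : V C) by (apply Hk; [exact HCg| apply agree_trans with D1; auto]).
  destruct (Hcl C HVC) as [_ HcC]. destruct (HcC m2) as [D [HD [HCD [_ [_ HnR]]]]].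
  apply HnR. exists r. split; auto. split; auto. eapply R_near; eauto.
Qed.

Fixpoint chainl (F : list nat -> nat -> list nat) (i : nat) : list nat :=
  match i with 0 => [] | S i' => chainl F i' ++ F (chainl F i') i' end.

Lemma chain_core A0 B (F : list nat -> nat -> list nat) : is_group_table B -> Rq A0 [] B ->
  (forall q t, Rq A0 q B -> F q t <> [] /\ In t (q ++ F q t) /\ Rq A0 (q ++ F q t) B) ->
  Sq A0 [] B.
Proof.
  intros HB H0 HF.
  assert (HR : forall i, Rq A0 (chainl F i) B).
  { induction i; simpl; auto. apply HF; auto. }
  assert (Hlen : forall i, i <= length (chainl F i)).
  { induction i; simpl. lia. rewrite length_app.
    pose proof (proj1 (HF _ i (HR i))) as Hne.
    destruct (F (chainl F i) i) as [|x l] eqn:E.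
    - exfalso; apply Hne; first [exact E | reflexivity].
    - simpl; lia. }
  assert (Hpre : forall i d, exists s, chainl F (d + i) = chainl F i ++ s).
  { intros i d. induction d as [|d [s Hs]]. exists []; rewrite app_nil_r; reflexivity.
    exists (s ++ F (chainl F (d + i)) (d + i)). change (S d + i) with (S (d + i)).
    cbn [chainl]. rewrite Hs, app_assoc. reflexivity. }
  assert (Hst : forall i i' j, i <= i' -> j < length (chainl F i) ->
                 nth j (chainl F i') 0 = nth j (chainl F i) 0).
  { intros i i' j Hii' Hj. destruct (Hpre i (i' - i)) as [s Hs].
    replace (i' - i + i) with i' in Hs by lia. rewrite Hs, app_nth1; auto. }
  set (psi := fun j => nth j (chainl F (S j)) 0).
  assert (Hpsi : forall j i, j < i -> nth j (chainl F i) 0 = psi j).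
  { intros j i Hji. unfold psi. destruct (Nat.le_ge_cases (S j) i).
    - apply Hst; [assumption|]. specialize (Hlen (S j)); lia.
    - replace i with (S j) by lia. reflexivity. }
  assert (Hinj : forall i j j', j < length (chainl F i) -> j' < length (chainl F i) ->
                 nth j (chainl F i) 0 = nth j' (chainl F i) 0 -> j = j').
  { intros i j j' Hj Hj' E. destruct (HR i) as [m Hm].
    destruct (Hm B HB (agree_refl _ _)) as [_ Hc].
    destruct (Hc 0) as [C [_ [_ [_ [phi [_ [_ [_ Hq]]]]]]]].
    rewrite <- (Hq j Hj), <- (Hq j' Hj'), E. reflexivity. }
  assert (Hsurj : forall y, exists j, psi j = y).
  { intros y. destruct (In_nth _ _ 0 (proj1 (proj2 (HF _ y (HR y))))) as [j [Hj Ej]].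
    assert (Hj' : j < length (chainl F (S y))) by exact Hj.
    assert (Ej' : nth j (chainl F (S y)) 0 = y) by exact Ej.
    exists j. rewrite <- (Hpsi j (S y + S j)) by lia. rewrite (Hst (S y)) by (auto; lia). exact Ej'. }
  assert (Hpinj : forall j j', psi j = psi j' -> j = j').
  { intros j j' E. apply (Hinj (S (j + j'))); try (specialize (Hlen (S (j + j'))); lia).
    rewrite !Hpsi by lia. exact E. }
  assert (Hhom : forall j l, A0 (psi j) (psi l) = psi (B j l)).
  { intros j l. destruct (Hsurj (A0 (psi j) (psi l))) as [r Er]. rewrite <- Er. f_equal.
    set (i := S (j + l + r)). destruct (HR i) as [m Hm].
    destruct (Hm B HB (agree_refl _ _)) as [_ Hc].
    destruct (Hc (S (j + l))) as [C [HC [HBC [_ [phi [phii [_ [Hh Hq]]]]]]]].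
    assert (Hli : i <= length (chainl F i)) by apply Hlen.
    assert (Ej : phi (psi j) = j) by (rewrite <- (Hpsi j i) by (unfold i; lia); apply Hq; unfold i in *; lia).
    assert (El : phi (psi l) = l) by (rewrite <- (Hpsi l i) by (unfold i; lia); apply Hq; unfold i in *; lia).
    assert (Er' : phi (psi r) = r) by (rewrite <- (Hpsi r i) by (unfold i; lia); apply Hq; unfold i in *; lia).
    assert (H : C (phi (psi j)) (phi (psi l)) = phi (A0 (psi j) (psi l))) by apply Hh.
    rewrite Ej, El, <- Er, Er' in H. rewrite HBC by lia. symmetry; exact H. }
  set (psii := fun y => proj1_sig (constructive_indefinite_description _ (Hsurj y))).
  assert (Hpsii : forall y, psi (psii y) = y).
  { intros y. unfold psii. destruct (constructive_indefinite_description _ _); simpl; auto. }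
  assert (Hbp : bij psi psii).
  { split; [intros x; apply Hpinj; rewrite Hpsii; reflexivity | exact Hpsii]. }
  split; auto. exists psii, psi. split; [apply bij_sym; exact Hbp|]. split.
  - exact (hom_inv B A0 psi psii Hhom Hbp).
  - intros j Hj; simpl in Hj; lia.
Qed.

Lemma chain A0 B : is_group_table B -> Rq A0 [] B ->
  (forall q t, Rq A0 q B -> exists r, r <> [] /\ In t (q ++ r) /\ Rq A0 (q ++ r) B) ->
  Sq A0 [] B.
Proof.
  intros HB H0 Hstep.
  assert (Hs' : forall qt : list nat * nat, exists r, Rq A0 (fst qt) B ->
            r <> [] /\ In (snd qt) (fst qt ++ r) /\ Rq A0 (fst qt ++ r) B).
  { intros [q t]. destruct (classic (Rq A0 q B)) as [HR|HR].
    - destruct (Hstep q t HR) as [r Hr]. exists r; auto.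
    - exists []; intros; contradiction. }
  apply (chain_core A0 B (fun q t => proj1_sig (constructive_indefinite_description _ (Hs' (q, t))))); auto.
  intros q t. destruct (constructive_indefinite_description _ _) as [r Hr]. simpl. exact Hr.
Qed.

Lemma comeager_S A0 : KeyP A0 -> DensP A0 ->
  meager (fun B => is_group_table B /\ ~ Sq A0 [] B).
Proof.
  intros K Dn.
  exists (fun k A => (k = 0 /\ Bad0 A0 A) \/ exists q t, k = S (enc_list (t :: q)) /\ Bad A0 q t A).
  split.
  - intros k. destruct k as [|k].
    + apply nd_mono with (Bad0 A0). apply nd_Bad0; auto.
      intros A [[_ H]|[q [t [E _]]]]; [exact H|discriminate].
    + destruct (classic (exists q t, k = enc_list (t :: q))) as [[q [t E]]|Hno].
      * apply nd_mono with (Bad A0 q t). apply nd_Bad; auto.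
        intros A [[E' _]|[q' [t' [E' H]]]]; [discriminate|]. apply (f_equal pred) in E'; cbn [pred] in E'.
        rewrite E in E'. apply enc_inj in E'. injection E' as E1 E2. subst. exact H.
      * apply nd_mono with (Bad0 A0). apply nd_Bad0; auto.
        intros A [[E' _]|[q' [t' [E' _]]]]; [discriminate|]. exfalso; apply Hno.
        exists q', t'. apply (f_equal pred) in E'; exact E'.
  - intros B HB [_ HnS]. apply NNPP. intros Hno.
    apply HnS. apply chain; auto.
    + apply NNPP; intros H; apply Hno; exists 0; left; split; auto; split; auto.
    + intros q t HR. apply NNPP; intros H; apply Hno; exists (S (enc_list (t :: q))); right.
      exists q, t; split; auto. split; auto.
Qed.

Theorem theorem5p6 (H : Type) (mul : H -> H -> H) (e : H) (inv : H -> H)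
  (mul_assoc : forall a b c, mul (mul a b) c = mul a (mul b c))
  (mul_e_l : forall a, mul e a = a) (mul_e_r : forall a, mul a e = a)
  (mul_inv_l : forall a, mul (inv a) a = e) (mul_inv_r : forall a, mul a (inv a) = e) :
  meager (iso_class mul) \/ comeager (iso_class mul).
Proof.
  destruct (classic (meager (iso_class mul))) as [Hm|Hnm]; [left; exact Hm|right].
  destruct (classic (exists A0, iso_class mul A0)) as [[A0 HA0]|Hno].
  2:{ exfalso. apply Hnm. exists (fun _ _ => False). split.
      - intros k V HV Hcl A HA. destruct (Hcl A HA) as [_ Hc]. destruct (Hc 0) as [? [? [? []]]].
      - intros A _ HA. exfalso; apply Hno; eauto. }
  pose proof HA0 as HA0'.
  destruct HA0 as [HA0g [f0 [g0 [Hfg0 [Hgf0 Hh0]]]]].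
  assert (OtoS : forall C, iso_class mul C -> Sq A0 [] C).
  { intros C [HC [f [g [Hfg [Hgf Hh]]]]]. split; auto.
    exists (fun x => g (f0 x)), (fun y => g0 (f y)). split; [split|split].
    - intros x. rewrite Hgf, Hfg0. reflexivity.
    - intros y. rewrite Hgf0, Hfg. reflexivity.
    - intros x y. rewrite Hh0. rewrite <- (Hfg (C (g (f0 x)) (g (f0 y)))). rewrite Hh, !Hgf. reflexivity.
    - intros j Hj; simpl in Hj; lia. }
  assert (StoO : forall C, Sq A0 [] C -> iso_class mul C).
  { intros C [HC [phi [phii [Hb [Hh _]]]]]. split; auto.
    pose proof (hom_inv _ _ _ _ Hh Hb) as Hh'. destruct Hb as [b1 b2].
    exists (fun x => f0 (phii x)), (fun h => phi (g0 h)). split; [|split].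
    - intros x. rewrite Hfg0, b2. reflexivity.
    - intros h. rewrite b1, Hgf0. reflexivity.
    - intros x y. rewrite <- Hh'. apply Hh0. }
  assert (NM : ~ meager (Sq A0 [])).
  { intros [Ns [Hnd Hcov]]. apply Hnm. exists Ns. split; auto. }
  pose proof (key A0 HA0g NM) as K.
  assert (HS0 : Sq A0 [] A0) by (apply OtoS; exact HA0').
  destruct (K [] A0 HS0) as [m Hm].
  pose proof (density A0 A0 m HS0 Hm) as Dn.
  destruct (comeager_S A0 K Dn) as [Ns [Hnd Hcov]].
  unfold comeager. exists Ns. split; [exact Hnd|]. intros A HA [_ HnO]. apply Hcov; [exact HA|]. split; [exact HA|]. intros HS; apply HnO; apply StoO; exact HS.
Qed.
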